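(* Assume (A2)–(A4). Then for every $n\ge0$ and all $(x,t)\in K_{R^*,T^*}$, $\partial_t\phi_n(x,t)\ge(1+\varepsilon_0)|\partial_x\phi_n(x,t)|$ and $\partial_t\psi_n(x,t)\ge(1+\varepsilon_0)|\partial_x\psi_n(x,t)|$.
   Context: Let $p>1$ and $\mu>0$ with $p<1+2/\mu$, and let $R^*,T^*>0$. Write $B_R=\{x\in\mathbb{R}:|x|<R\}$. Fix constants $\gamma_1,\gamma_2>0$ with $\gamma_1+\gamma_2>\max\big(1,(\mu p 2^p)^{1/(p-1)}\big)$ (standing assumption). Assumptions on the real functions $f,g$: (A2) $f\ge\gamma_1$, $g\ge\gamma_2$ on $B_{R^*+T^*}$. (A3) $f,g\in\mathcal{C}^4(\overline{B_{R^*+T^*}})$. (A4) There is $\varepsilon_0>0$ with $2^{-p}(\gamma_1+\gamma_2)^p-\frac{\mu}{2}(\gamma_1+\gamma_2)\ge(2+\varepsilon_0)\max_{x\in B_{R^*+T^*}}(|f'(x)|+|g'(x)|)$. Let $K_{R^*,T^*}=\{(x,t):t>0,\ |x-x_0|<T^*-t\ \text{for some } x_0\in B_{R^*}\}$. Define iterates $\phi_0\equiv\gamma_1$, $\psi_0\equiv\gamma_2$ and, with $\mathcal{N}_n(x,s)=2^{-p}|\phi_n+\psi_n|^p(x,s)-\frac{\mu}{1+s}\frac{(\phi_n+\psi_n)(x,s)}{2}$, $\phi_{n+1}(x,t)=f(x+t)+\int_0^t\mathcal{N}_n(x+t-s,s)\,ds$, $\psi_{n+1}(x,t)=g(x-t)+\int_0^t\mathcal{N}_n(x-t+s,s)\,ds$.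 *)

(* Defs.v *)
From Stdlib Require Import Reals.
From Coquelicot Require Import Coquelicot.
Open Scope R_scope.

Definition powabs (y p : R) : R :=
  if Req_EM_T y 0 then 0 else Rpower (Rabs y) p.

Definition C4_closed_ball (f : R -> R) (M : R) : Prop :=
  forall k : nat, (k <= 4)%nat ->
    (forall x, Rabs x < M -> ex_derive_n f k x) /\
    exists h : R -> R,
      (forall x, Rabs x < M -> h x = Derive_n f k x) /\
      (forall x, Rabs x <= M ->
         filterlim h (within (fun y => Rabs y <= M) (locally x)) (locally (h x))).

Definition Nonlin (p mu : R) (phi psi : R -> R -> R) (x s : R) : R :=
  Rpower 2 (- p) * powabs (phi x s + psi x s) p
  - mu / (1 + s) * ((phi x s + psi x s) / 2).

Fixpoint iterates (p mu gamma1 gamma2 : R) (f g : R -> R) (n : nat)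
  : (R -> R -> R) * (R -> R -> R) :=
  match n with
  | O => (fun _ _ => gamma1, fun _ _ => gamma2)
  | S m =>
      let '(ph, ps) := iterates p mu gamma1 gamma2 f g m in
      (fun x t => f (x + t) + RInt (fun s => Nonlin p mu ph ps (x + t - s) s) 0 t,
       fun x t => g (x - t) + RInt (fun s => Nonlin p mu ph ps (x - t + s) s) 0 t)
  end.

Definition phi_n p mu gamma1 gamma2 f g n :=
  fst (iterates p mu gamma1 gamma2 f g n).
Definition psi_n p mu gamma1 gamma2 f g n :=
  snd (iterates p mu gamma1 gamma2 f g n).

Definition in_K (Rs Ts x t : R) : Prop :=
  0 < t /\ exists x0, Rabs x0 < Rs /\ Rabs (x - x0) < Ts - t.

(* Main.v *)
Require Import Defs.
From Stdlib Require Import Reals Lra Lia FunctionalExtensionality.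
From Coquelicot Require Import Coquelicot.
Open Scope R_scope.


Lemma loc_eps (P : R -> Prop) y :
  (exists d, 0 < d /\ forall z, Rabs (z - y) < d -> P z) -> locally y P.
Proof.
  intros [d [Hd H]]. exists (mkposreal d Hd). intros z Hz. apply H. exact Hz.
Qed.

Lemma eps_loc (P : R -> Prop) y :
  locally y P -> exists d, 0 < d /\ forall z, Rabs (z - y) < d -> P z.
Proof.
  intros [d H]. exists d. split. apply cond_pos. intros z Hz. apply H. exact Hz.
Qed.

Lemma cont_eps (f : R -> R) y :
  (forall eps, 0 < eps -> exists d, 0 < d /\ forall z, Rabs (z - y) < d -> Rabs (f z - f y) < eps) ->
  continuous f y.
Proof.
  intros H. apply filterlim_locally. intros eps.
  destruct (H eps (cond_pos eps)) as [d [Hd H']].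
  apply loc_eps. exists d. split; auto.
Qed.

Lemma cR_mult (f g : R -> R) x : continuous f x -> continuous g x -> continuous (fun z => f z * g z) x.
Proof. exact (@continuous_mult R_UniformSpace R_AbsRing f g x). Qed.
Lemma cR_plus (f g : R -> R) x : continuous f x -> continuous g x -> continuous (fun z => f z + g z) x.
Proof. exact (@continuous_plus R_UniformSpace R_AbsRing R_NormedModule f g x). Qed.
Lemma cR_minus (f g : R -> R) x : continuous f x -> continuous g x -> continuous (fun z => f z - g z) x.
Proof. exact (@continuous_minus R_UniformSpace R_AbsRing R_NormedModule f g x). Qed.
Lemma cR_const (c : R) x : continuous (fun _ : R => c) x.
Proof. exact (@continuous_const R_UniformSpace R_UniformSpace c x). Qed.
Lemma cR_id x : continuous (fun z : R => z) x.
Proof. exact (@continuous_id R_UniformSpace x). Qed.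

Lemma powabs_0 q : powabs 0 q = 0.
Proof. unfold powabs. destruct (Req_EM_T 0 0); [reflexivity| congruence]. Qed.

Lemma powabs_nz y q : y <> 0 -> powabs y q = Rpower (Rabs y) q.
Proof. intros H. unfold powabs. destruct (Req_EM_T y 0); [congruence| reflexivity]. Qed.

Lemma powabs_ge0 y q : 0 <= powabs y q.
Proof. unfold powabs. destruct (Req_EM_T y 0). lra. unfold Rpower. left; apply exp_pos. Qed.

Lemma small_powabs q eps : 0 < q -> 0 < eps ->
  exists d, 0 < d /\ forall z, Rabs z < d -> powabs z q < eps.
Proof.
  intros Hq He. exists (Rpower eps (/ q)). split. unfold Rpower; apply exp_pos.
  intros z Hz. destruct (Req_EM_T z 0) as [->|Hz0]. rewrite powabs_0; lra.
  rewrite powabs_nz by auto.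
  replace eps with (Rpower (Rpower eps (/q)) q).
  apply Rlt_Rpower_l; auto. split; auto. apply Rabs_pos_lt; auto.
  rewrite Rpower_mult. rewrite Rinv_l by lra. apply Rpower_1; auto.
Qed.

Lemma powabs_cont q y : 0 < q -> continuous (fun z => powabs z q) y.
Proof.
  intros Hq. destruct (Req_EM_T y 0) as [->|Hy].
  - apply cont_eps. intros eps He. destruct (small_powabs q eps Hq He) as [d [Hd H]].
    exists d; split; auto. intros z Hz. rewrite powabs_0, Rminus_0_r, Rabs_pos_eq.
    apply H. rewrite Rminus_0_r in Hz. auto. apply powabs_ge0.
  - apply continuous_ext_loc with (fun z => Rpower (Rabs z) q).
    apply loc_eps. exists (Rabs y). split. apply Rabs_pos_lt; auto.
    intros z Hz. rewrite powabs_nz; auto. intros ->. rewrite Rminus_0_l, Rabs_Ropp in Hz. lra.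
    apply (continuous_comp Rabs (fun w => Rpower w q)). apply continuous_Rabs.
    apply (@ex_derive_continuous R_AbsRing R_NormedModule (fun w => Rpower w q)). exists (q * Rpower (Rabs y) (q - 1)).
    apply is_derive_Reals. apply derivable_pt_lim_power. apply Rabs_pos_lt; auto.
Qed.

Definition dpow (p y : R) : R :=
  p * powabs y (p - 1) * (if Rle_dec 0 y then 1 else -1).

Lemma powabs_derive p y : 1 < p -> is_derive (fun z => powabs z p) y (dpow p y).
Proof.
  intros Hp. unfold dpow.
  destruct (Rtotal_order y 0) as [Hy|[Hy|Hy]].
  - destruct (Rle_dec 0 y) as [H|H]; [lra|].
    apply is_derive_ext_loc with (fun z => Rpower (- z) p).
    apply loc_eps. exists (- y). split. lra. intros z Hz.
    rewrite powabs_nz. rewrite Rabs_left; auto. apply Rabs_def2 in Hz; lra.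
    apply Rabs_def2 in Hz; lra.
    rewrite powabs_nz by lra. rewrite Rabs_left by lra.
    replace (p * Rpower (- y) (p - 1) * -1) with (scal (-1) (p * Rpower (- y) (p - 1))).
    apply (is_derive_comp (fun z => Rpower z p) (fun z => - z)).
    apply is_derive_Reals. apply derivable_pt_lim_power. lra.
    auto_derive; auto; ring.
    unfold scal; simpl; unfold mult; simpl; ring.
  - subst y. rewrite powabs_0. replace (p * 0 * _) with 0 by ring.
    apply is_derive_Reals. intros eps He.
    destruct (small_powabs (p - 1) eps) as [d [Hd H]]; try lra.
    exists (mkposreal d Hd). intros h Hh0 Hh. simpl in Hh.
    rewrite Rplus_0_l, powabs_0, Rminus_0_r, Rminus_0_r.
    rewrite powabs_nz by auto.
    replace (Rpower (Rabs h) p / h) with (Rpower (Rabs h) (p - 1) * (Rabs h / h)).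
    rewrite Rabs_mult. rewrite (Rabs_pos_eq (Rpower _ _)) by (left; unfold Rpower; apply exp_pos).
    replace (Rabs (Rabs h / h)) with 1.
    rewrite Rmult_1_r. rewrite <- powabs_nz by auto. apply H; auto.
    unfold Rdiv. rewrite Rabs_mult, Rabs_Rabsolu, Rabs_inv. field. apply Rabs_no_R0; auto.
    replace p with ((p - 1) + 1) at 2 by ring. rewrite Rpower_plus, Rpower_1.
    field; auto. apply Rabs_pos_lt; auto.
  - destruct (Rle_dec 0 y) as [H|H]; [|lra].
    apply is_derive_ext_loc with (fun z => Rpower z p).
    apply loc_eps. exists y. split. lra. intros z Hz.
    rewrite powabs_nz. rewrite Rabs_pos_eq; auto. apply Rabs_def2 in Hz; lra.
    apply Rabs_def2 in Hz; lra.
    rewrite powabs_nz by lra. rewrite Rabs_pos_eq by lra. rewrite Rmult_1_r.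
    apply is_derive_Reals. apply derivable_pt_lim_power. lra.
Qed.

Lemma dpow_cont p y : 1 < p -> continuous (dpow p) y.
Proof.
  intros Hp. unfold dpow.
  destruct (Rtotal_order y 0) as [Hy|[Hy|Hy]].
  - apply continuous_ext_loc with (fun z => p * powabs z (p - 1) * -1).
    apply loc_eps. exists (- y). split. lra. intros z Hz.
    destruct (Rle_dec 0 z); auto. apply Rabs_def2 in Hz; lra.
    apply cR_mult. apply cR_mult. apply cR_const.
    apply powabs_cont; lra. apply cR_const.
  - subst y. apply cont_eps. intros eps He.
    destruct (small_powabs (p - 1) (eps / p)) as [d [Hd H]]; try lra.
    apply Rdiv_lt_0_compat; lra.
    exists d. split; auto. intros z Hz. rewrite powabs_0. rewrite Rminus_0_r in Hz.
    replace (p * 0 * _) with 0 by ring. rewrite Rminus_0_r.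
    rewrite Rabs_mult, Rabs_mult. rewrite (Rabs_pos_eq p) by lra.
    rewrite (Rabs_pos_eq (powabs _ _)) by apply powabs_ge0.
    replace (Rabs (if Rle_dec 0 z then 1 else -1)) with 1.
    specialize (H z Hz). apply Rmult_lt_compat_l with (r := p) in H; try lra.
    replace (p * (eps / p)) with eps in H by (field; lra). lra.
    destruct (Rle_dec 0 z). rewrite Rabs_R1; auto. rewrite Rabs_left; lra.
  - apply continuous_ext_loc with (fun z => p * powabs z (p - 1) * 1).
    apply loc_eps. exists y. split. lra. intros z Hz.
    destruct (Rle_dec 0 z); auto. apply Rabs_def2 in Hz; lra.
    apply cR_mult. apply cR_mult. apply cR_const.
    apply powabs_cont; lra. apply cR_const.
Qed.


Lemma cont_to_eps (f : R -> R) y : continuous f y ->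
  forall eps, 0 < eps -> exists d, 0 < d /\ forall z, Rabs (z - y) < d -> Rabs (f z - f y) < eps.
Proof.
  intros H eps He. apply filterlim_locally with (eps := mkposreal eps He) in H.
  apply eps_loc in H. exact H.
Qed.

Lemma c2d_comp (K g1 g2 : R -> R -> R) x t :
  continuity_2d_pt K (g1 x t) (g2 x t) -> continuity_2d_pt g1 x t -> continuity_2d_pt g2 x t ->
  continuity_2d_pt (fun a b => K (g1 a b) (g2 a b)) x t.
Proof.
  intros HK H1 H2 eps. destruct (HK eps) as [d Hd].
  destruct (H1 d) as [d1 Hd1]. destruct (H2 d) as [d2 Hd2].
  assert (Hm : 0 < Rmin d1 d2) by (apply Rmin_pos; apply cond_pos).
  exists (mkposreal _ Hm). simpl. intros u v Hu Hv.
  apply Hd. apply Hd1. eapply Rlt_le_trans; [exact Hu| apply Rmin_l].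
  eapply Rlt_le_trans; [exact Hv| apply Rmin_l].
  apply Hd2. eapply Rlt_le_trans; [exact Hu| apply Rmin_r].
  eapply Rlt_le_trans; [exact Hv| apply Rmin_r].
Qed.

Lemma c1d_comp (K : R -> R -> R) (g1 g2 : R -> R) s :
  continuity_2d_pt K (g1 s) (g2 s) -> continuous g1 s -> continuous g2 s ->
  continuous (fun z => K (g1 z) (g2 z)) s.
Proof.
  intros HK H1 H2. apply cont_eps. intros eps He.
  destruct (HK (mkposreal eps He)) as [d Hd].
  destruct (cont_to_eps _ _ H1 d (cond_pos d)) as [d1 [Hd1 H1']].
  destruct (cont_to_eps _ _ H2 d (cond_pos d)) as [d2 [Hd2 H2']].
  exists (Rmin d1 d2). split. apply Rmin_pos; auto.
  intros z Hz. apply (Hd (g1 z) (g2 z)).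
  apply H1'. eapply Rlt_le_trans; [exact Hz| apply Rmin_l].
  apply H2'. eapply Rlt_le_trans; [exact Hz| apply Rmin_r].
Qed.

Lemma c2d_of_1d (f : R -> R) (g : R -> R -> R) x t :
  continuous f (g x t) -> continuity_2d_pt g x t -> continuity_2d_pt (fun a b => f (g a b)) x t.
Proof.
  intros Hf Hg. apply continuity_1d_2d_pt_comp; auto.
  apply continuity_pt_filterlim. exact Hf.
Qed.

Ltac c2d_aff :=
  repeat first [ apply continuity_2d_pt_plus | apply continuity_2d_pt_minus
               | apply continuity_2d_pt_mult | apply continuity_2d_pt_opp
               | apply continuity_2d_pt_id1 | apply continuity_2d_pt_id2
               | apply continuity_2d_pt_const ].

Lemma cR_opp (f : R -> R) x : continuous f x -> continuous (fun z => - f z) x.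
Proof. exact (@continuous_opp R_UniformSpace R_AbsRing R_NormedModule f x). Qed.
Lemma cR_Ropp x : continuous Ropp x.
Proof. apply (cR_opp (fun z => z)). apply cR_id. Qed.

Ltac c1d_aff :=
  repeat first [ apply cR_minus | apply cR_plus | apply cR_mult | apply cR_opp | apply cR_Ropp | apply cR_id | apply cR_const ].

Lemma test_aff x0 a t0 s0 : continuity_2d_pt (fun u v => x0 + a * (u - t0) + (u - v)) s0 s0.
Proof. c2d_aff. Qed.
Lemma test_aff1 x0 a t0 s0 : continuous (fun u => x0 + a * (u - t0) + (u - s0)) s0.
Proof. c1d_aff. Qed.


Definition Om (M x t : R) : Prop := Rabs (x + t) < M /\ Rabs (x - t) < M /\ - / 2 < t.

Lemma Rabs_le_between' x y : Rabs x <= y -> -y <= x /\ x <= y.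
Proof. intros H. apply Rabs_le_between in H. lra. Qed.

Ltac unabs :=
  repeat match goal with
  | H : Rabs _ < _ |- _ => apply Rabs_def2 in H; destruct H
  | H : Rabs _ <= _ |- _ => apply Rabs_le_between' in H; destruct H
  end.



Lemma tube M sg a x t : (sg = 1 \/ sg = -1) -> Om M x t ->
  exists d, 0 < d /\ forall x' tau s, Rabs (x' - x) < d -> Rabs (tau - t) < d ->
    Rmin 0 t - d < s < Rmax 0 t + d ->
    Om M (x' + a * (tau - t) + sg * (tau - s)) s.
Proof.
  intros Hsg [H1 [H2 H3]].
  set (m := Rmin (Rmin (Rmin (M - Rabs (x + t)) (M - Rabs (x - t))) (t + /2)) 1).
  assert (Hm : 0 < m).
  { unfold m. repeat apply Rmin_pos; lra. }
  assert (Hm1 : m <= M - Rabs (x + t)) by (unfold m; repeat (eapply Rle_trans; [apply Rmin_l|]); lra).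
  assert (Hm2 : m <= M - Rabs (x - t)) by (unfold m; eapply Rle_trans; [apply Rmin_l|]; eapply Rle_trans; [apply Rmin_l|]; apply Rmin_r).
  assert (Hm3 : m <= t + /2) by (unfold m; eapply Rle_trans; [apply Rmin_l|]; apply Rmin_r).
  assert (Hm4 : m <= 1) by (unfold m; apply Rmin_r).
  set (k := Rabs a + 4).
  assert (Hk : 4 <= k) by (unfold k; pose proof (Rabs_pos a); lra).
  exists (m / k). split. apply Rdiv_lt_0_compat; lra.
  intros x' tau s Hx Ht Hs.
  assert (Hmk : m / k * k = m) by (field; lra).
  assert (Hmk2 : 0 < m / k) by (apply Rdiv_lt_0_compat; lra).
  assert (Ha : Rabs (a * (tau - t)) <= Rabs a * (m / k)).
  { rewrite Rabs_mult. apply Rmult_le_compat_l. apply Rabs_pos. lra. }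
  assert (Hsum : Rabs a * (m / k) + 4 * (m / k) = m) by (unfold k in *; field; lra).
  pose proof (Rabs_pos a).
  assert (Hak : 0 <= Rabs a * (m/k)) by (apply Rmult_le_pos; lra).
  pose proof (Rle_abs (x + t)). pose proof (Rle_abs (- (x + t))). rewrite Rabs_Ropp in *.
  pose proof (Rle_abs (x - t)). pose proof (Rle_abs (- (x - t))). rewrite Rabs_Ropp in *.
  revert Hs. unfold Rmin, Rmax. destruct (Rle_dec 0 t); intros Hs;
  unfold Om; unabs; destruct Hsg as [-> | ->]; repeat split;
  try (apply Rabs_def1); lra.
Qed.

Lemma Om_open M x t : Om M x t -> exists d, 0 < d /\ forall u v, Rabs (u - x) < d -> Rabs (v - t) < d -> Om M u v.
Proof.
  intros [H1 [H2 H3]].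
  set (m := Rmin (Rmin (M - Rabs (x + t)) (M - Rabs (x - t))) (t + /2)).
  assert (Hm : 0 < m).
  { unfold m. repeat apply Rmin_pos; lra. }
  assert (Hm1 : m <= M - Rabs (x + t)) by (unfold m; eapply Rle_trans; [apply Rmin_l|apply Rmin_l]).
  assert (Hm2 : m <= M - Rabs (x - t)) by (unfold m; eapply Rle_trans; [apply Rmin_l|apply Rmin_r]).
  assert (Hm3 : m <= t + /2) by (unfold m; apply Rmin_r).
  pose proof (Rle_abs (x + t)). pose proof (Rle_abs (- (x + t))). rewrite Rabs_Ropp in *.
  pose proof (Rle_abs (x - t)). pose proof (Rle_abs (- (x - t))). rewrite Rabs_Ropp in *.
  exists (m / 2). split. lra. intros u v Hu Hv. unfold Om; unabs; repeat split; try apply Rabs_def1; lra.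
Qed.


Lemma RInt_Chasles_R (f : R -> R) a b c :
  ex_RInt f a b -> ex_RInt f b c -> RInt f a b + RInt f b c = RInt f a c.
Proof. intros. exact (RInt_Chasles f a b c H H0). Qed.

Lemma RInt_minus_R (f g : R -> R) a b :
  ex_RInt f a b -> ex_RInt g a b -> RInt (fun x => f x - g x) a b = RInt f a b - RInt g a b.
Proof. intros. exact (RInt_minus f g a b H H0). Qed.

Lemma ex_RInt_minus_R (f g : R -> R) a b :
  ex_RInt f a b -> ex_RInt g a b -> ex_RInt (fun x => f x - g x) a b.
Proof. intros. exact (ex_RInt_minus f g a b H H0). Qed.

Lemma ex_RInt_cont_R (f : R -> R) a b :
  (forall z, Rmin a b <= z <= Rmax a b -> continuous f z) -> ex_RInt f a b.
Proof. intros H. apply (@ex_RInt_continuous R_CompleteNormedModule). exact H. Qed.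

Lemma RInt_abs_bound (f : R -> R) a b B : ex_RInt f a b ->
  (forall s, Rmin a b <= s <= Rmax a b -> Rabs (f s) <= B) ->
  Rabs (RInt f a b) <= Rabs (b - a) * B.
Proof.
  intros Hex H. destruct (Rle_dec a b) as [Hab|Hab].
  - rewrite (Rabs_pos_eq (b - a)) by lra. apply abs_RInt_le_const; auto.
    intros s Hs. apply H. rewrite Rmin_left, Rmax_right; lra.
  - apply Rnot_le_lt in Hab. assert (Hex' := ex_RInt_swap _ _ _ Hex). rewrite <- (opp_RInt_swap f b a Hex'). unfold opp; simpl.
    rewrite Rabs_Ropp. rewrite (Rabs_left (b - a)) by lra. replace (- (b - a)) with (a - b) by ring.
    apply abs_RInt_le_const; auto. lra.
    intros s Hs. apply H. rewrite Rmin_right, Rmax_left; lra.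
Qed.

Lemma tube0 M sg x t : (sg = 1 \/ sg = -1) -> Om M x t ->
  exists d, 0 < d /\ forall x' tau s, Rabs (x' - x) < d -> Rabs (tau - t) < d ->
    Rmin 0 t - d < s < Rmax 0 t + d -> Om M (x' + sg * (tau - s)) s.
Proof.
  intros Hsg H. destruct (tube M sg 0 x t Hsg H) as [d [Hd Ht]].
  exists d. split; auto. intros x' tau s Hq1 Hq2 Hq3.
  specialize (Ht x' tau s Hq1 Hq2 Hq3). replace (x' + sg * (tau - s)) with (x' + 0 * (tau - t) + sg * (tau - s)) by ring.
  auto.
Qed.

Lemma cont_line M sg K x t s : (forall u v, Om M u v -> continuity_2d_pt K u v) ->
  Om M (x + sg * (t - s)) s -> continuous (fun z => K (x + sg * (t - z)) z) s.
Proof.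
  intros HK Hs. apply (c1d_comp K (fun z => x + sg * (t - z)) (fun z => z)).
  apply HK; auto. c1d_aff. c1d_aff.
Qed.

Lemma int_cont M sg K x0 t0 : (sg = 1 \/ sg = -1) ->
  (forall u v, Om M u v -> continuity_2d_pt K u v) -> Om M x0 t0 ->
  continuity_2d_pt (fun x t => RInt (fun s => K (x + sg * (t - s)) s) 0 t) x0 t0.
Proof.
  intros Hsg HK H0 eps.
  destruct (tube0 M sg x0 t0 Hsg H0) as [d [Hd Htube]].
  destruct (HK x0 t0 H0 (mkposreal 1 Rlt_0_1)) as [d1 Hd1]. simpl in Hd1.
  set (B := Rabs (K x0 t0) + 1).
  assert (HB : 1 <= B) by (unfold B; pose proof (Rabs_pos (K x0 t0)); lra).
  set (c := x0 + sg * t0).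
  assert (Hcu : forall s, Rmin 0 t0 <= s <= Rmax 0 t0 ->
    continuity_2d_pt (fun s w => K (w - sg * s) s) s c).
  { intros s Hs. apply (c2d_comp K (fun s w => w - sg * s) (fun s w => s)).
    replace (c - sg * s) with (x0 + sg * (t0 - s)) by (unfold c; ring).
    apply HK. apply Htube. rewrite Rminus_eq_0, Rabs_R0; lra. rewrite Rminus_eq_0, Rabs_R0; lra. lra.
    c2d_aff. c2d_aff. }
  assert (He1 : 0 < eps / (2 * (Rabs t0 + 1))).
  { apply Rdiv_lt_0_compat. apply cond_pos. pose proof (Rabs_pos t0); lra. }
  destruct (uniform_continuity_2d_1d _ _ _ _ Hcu (mkposreal _ He1)) as [du Hdu]. simpl in Hdu.
  assert (He2 : 0 < eps / (2 * (B + 1))).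
  { apply Rdiv_lt_0_compat. apply cond_pos. lra. }
  pose proof (cond_pos d1). pose proof (cond_pos du). pose proof (cond_pos eps).
  set (df := Rmin (Rmin (d / 2) (d1 / 2)) (Rmin (du / 2) (eps / (2 * (B + 1))))).
  assert (Hdf : 0 < df) by (unfold df; repeat apply Rmin_pos; lra).
  assert (Hdf1 : df <= d / 2) by (unfold df; eapply Rle_trans; [apply Rmin_l|]; apply Rmin_l).
  assert (Hdf2 : df <= d1 / 2) by (unfold df; eapply Rle_trans; [apply Rmin_l|]; apply Rmin_r).
  assert (Hdf3 : df <= du / 2) by (unfold df; eapply Rle_trans; [apply Rmin_r|]; apply Rmin_l).
  assert (Hdf4 : df <= eps / (2 * (B + 1))) by (unfold df; eapply Rle_trans; [apply Rmin_r|]; apply Rmin_r).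
  exists (mkposreal df Hdf). simpl. intros x t Hx Ht.
  set (Kx := fun s => K (x + sg * (t - s)) s).
  set (Kx0 := fun s => K (x0 + sg * (t0 - s)) s).
  assert (Hrange : forall s, Rmin 0 t0 <= s <= Rmax 0 t0 -> Rmin 0 t0 - d < s < Rmax 0 t0 + d) by (intros; lra).
  assert (HexA : ex_RInt Kx 0 t0).
  { apply ex_RInt_cont_R. intros s Hs. apply (cont_line M). auto. apply Htube; auto; lra. }
  assert (HexB : ex_RInt Kx t0 t).
  { apply ex_RInt_cont_R. intros s Hs. apply (cont_line M). auto. apply Htube; try lra.
    revert Hs. unabs. unfold Rmin, Rmax. repeat destruct Rle_dec; intros; lra. }
  assert (HexC : ex_RInt Kx0 0 t0).
  { apply ex_RInt_cont_R. intros s Hs. apply (cont_line M). auto. apply Htube; auto.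
    rewrite Rminus_eq_0, Rabs_R0; lra. rewrite Rminus_eq_0, Rabs_R0; lra. }
  change (Rabs (RInt Kx 0 t - RInt Kx0 0 t0) < eps).
  rewrite <- (RInt_Chasles_R Kx 0 t0 t) by auto.
  replace (RInt Kx 0 t0 + RInt Kx t0 t - RInt Kx0 0 t0)
    with ((RInt Kx 0 t0 - RInt Kx0 0 t0) + RInt Kx t0 t) by ring.
  rewrite <- RInt_minus_R by auto.
  eapply Rle_lt_trans. apply Rabs_triang.
  assert (Hq1 : Rabs (RInt (fun s => Kx s - Kx0 s) 0 t0) <= Rabs (t0 - 0) * (eps / (2 * (Rabs t0 + 1)))).
  { apply RInt_abs_bound. apply ex_RInt_minus_R; auto.
    intros s Hs. left. unfold Kx, Kx0.
    replace (x + sg * (t - s)) with ((x + sg * t) - sg * s) by ring.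
    replace (x0 + sg * (t0 - s)) with (c - sg * s) by (unfold c; ring).
    apply (Hdu s c s (x + sg * t)); auto; try lra.
    all: unfold c; try (rewrite Rminus_eq_0, Rabs_R0; lra); destruct Hsg as [-> | ->]; unabs; lra. }
  assert (Hq2 : Rabs (RInt Kx t0 t) <= Rabs (t - t0) * B).
  { apply RInt_abs_bound; auto. intros s Hs. unfold Kx.
    assert (Hb : Rabs (K (x + sg * (t - s)) s - K x0 t0) < 1).
    { apply Hd1. revert Hs. unabs. unfold Rmin, Rmax. destruct Hsg as [-> | ->];
      repeat destruct Rle_dec; intros; apply Rabs_def1; lra.
      revert Hs. unabs. unfold Rmin, Rmax. repeat destruct Rle_dec; intros; apply Rabs_def1; lra. }
    unfold B. pose proof (Rabs_triang_inv (K (x + sg * (t - s)) s) (K x0 t0)). lra. }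
  rewrite Rminus_0_r in Hq1.
  assert (Hq3 : Rabs t0 * (eps / (2 * (Rabs t0 + 1))) < eps / 2).
  { pose proof (Rabs_pos t0). unfold Rdiv.
    apply Rmult_lt_reg_r with (2 * (Rabs t0 + 1)). lra.
    field_simplify; try lra; try nra. }
  assert (Hq4 : Rabs (t - t0) * B < eps / 2).
  { assert (Rabs (t - t0) < eps / (2 * (B + 1))) by lra.
    apply Rle_lt_trans with (eps / (2 * (B + 1)) * B).
    apply Rmult_le_compat_r; lra.
    apply Rmult_lt_reg_r with (2 * (B + 1)). lra. field_simplify; try lra; try nra. }
  lra.
Qed.


Lemma dR_plus (f g : R -> R) x df dg : is_derive f x df -> is_derive g x dg ->
  is_derive (fun z => f z + g z) x (df + dg).
Proof. intros. exact (@is_derive_plus R_AbsRing R_NormedModule f g x df dg H H0). Qed.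

Lemma dR_eq (f : R -> R) x l l' : is_derive f x l -> l = l' -> is_derive f x l'.
Proof. intros H ->. exact H. Qed.

Lemma chain (g h : R -> R) u L b : is_derive g (h u) L -> is_derive h u b ->
  is_derive (fun z => g (h z)) u (b * L).
Proof. intros. exact (@is_derive_comp R_AbsRing R_NormedModule g h u L b H H0). Qed.

Ltac rR := match goal with |- ?a = ?b => change (@eq R a b) end.
Ltac ad := auto_derive; try (repeat split); try ring.

Definition NReg M (N Nx : R -> R -> R) := forall x t, Om M x t ->
  continuity_2d_pt N x t /\ continuity_2d_pt Nx x t /\ is_derive (fun z => N z t) x (Nx x t).

Definition FReg M (f df : R -> R) := forall y, Rabs y < M -> is_derive f y (df y) /\ continuous df y.

Lemma loc_Om M (G : R -> R -> R) u0 v0 : Om M (G u0 v0) v0 -> continuity_2d_pt G u0 v0 ->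
  locally_2d (fun u v => Om M (G u v) v) u0 v0.
Proof.
  intros HO HG. destruct (Om_open M _ _ HO) as [r [Hr Hr']].
  destruct (HG (mkposreal r Hr)) as [d1 Hd1]. simpl in Hd1.
  assert (Hm : 0 < Rmin d1 r) by (apply Rmin_pos; [apply cond_pos|lra]).
  exists (mkposreal _ Hm). simpl. intros u v Hu Hv. apply Hr'.
  apply Hd1. eapply Rlt_le_trans; [exact Hu|apply Rmin_l]. eapply Rlt_le_trans; [exact Hv|apply Rmin_l].
  eapply Rlt_le_trans; [exact Hv|apply Rmin_r].
Qed.

Lemma derive_comp_N M N Nx (G : R -> R -> R) b u v : NReg M N Nx -> Om M (G u v) v ->
  is_derive (fun z => G z v) u b -> is_derive (fun z => N (G z v) v) u (b * Nx (G u v) v).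
Proof.
  intros HN HO Hb. apply (chain (fun w => N w v) (fun z => G z v)); auto.
  apply HN; auto.
Qed.

Lemma cont_Derive_N M N Nx (G : R -> R -> R) b u0 v0 : NReg M N Nx ->
  (forall u v, continuity_2d_pt G u v) -> (forall u v, is_derive (fun z => G z v) u b) ->
  Om M (G u0 v0) v0 ->
  continuity_2d_pt (fun u v => Derive (fun z => N (G z v) v) u) u0 v0.
Proof.
  intros HN HG Hb HO.
  apply continuity_2d_pt_ext_loc with (fun u v => b * Nx (G u v) v).
  - generalize (loc_Om M G u0 v0 HO (HG u0 v0)). intros [d Hd]. exists d. intros u v Hu Hv.
    symmetry. apply is_derive_unique. apply derive_comp_N with M; auto.
  - apply continuity_2d_pt_mult. apply continuity_2d_pt_const.
    apply (c2d_comp Nx G (fun u v => v)). apply HN; auto. auto. apply continuity_2d_pt_id2.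
Qed.

Definition Phi (sg : R) (f : R -> R) (N : R -> R -> R) :=
  fun x t => f (x + sg * t) + RInt (fun s => N (x + sg * (t - s)) s) 0 t.
Definition DPhi (sg : R) (df : R -> R) (Nx : R -> R -> R) :=
  fun x t => df (x + sg * t) + RInt (fun s => Nx (x + sg * (t - s)) s) 0 t.

Lemma Om_sg M sg x t : (sg = 1 \/ sg = -1) -> Om M x t -> Rabs (x + sg * t) < M.
Proof. intros [-> | ->] [H1 [H2 H3]]. rewrite Rmult_1_l; auto. replace (x + -1 * t) with (x - t) by ring; auto. Qed.

Lemma S1 M sg f df N Nx x t : (sg = 1 \/ sg = -1) -> FReg M f df -> NReg M N Nx -> Om M x t ->
  continuity_2d_pt (Phi sg f N) x t /\ continuity_2d_pt (DPhi sg df Nx) x t.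
Proof.
  intros Hsg Hf HN HO. split.
  - unfold Phi. apply continuity_2d_pt_plus.
    apply (c2d_of_1d f (fun a b => a + sg * b)). apply (@ex_derive_continuous R_AbsRing R_NormedModule).
    exists (df (x + sg * t)). apply Hf. apply Om_sg; auto. c2d_aff.
    apply int_cont with M; auto. intros u v Huv; apply HN; auto.
  - unfold DPhi. apply continuity_2d_pt_plus.
    apply (c2d_of_1d df (fun a b => a + sg * b)). apply Hf. apply Om_sg; auto. c2d_aff.
    apply int_cont with M; auto. intros u v Huv; apply HN; auto.
Qed.


Lemma S3 M sg f df N Nx x t : (sg = 1 \/ sg = -1) -> FReg M f df -> NReg M N Nx -> Om M x t ->
  is_derive (fun z => Phi sg f N z t) x (DPhi sg df Nx x t).
Proof.
  intros Hsg Hf HN HO.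
  destruct (tube0 M sg x t Hsg HO) as [d [Hd Ht]].
  assert (Hx0 : Rabs (x - x) < d) by (rewrite Rminus_eq_0, Rabs_R0; lra).
  assert (Ht0 : Rabs (t - t) < d) by (rewrite Rminus_eq_0, Rabs_R0; lra).
  unfold Phi, DPhi. apply dR_plus.
  - eapply dR_eq. apply (chain f (fun z => z + sg * t) x (df (x + sg * t)) 1). apply Hf, Om_sg; auto.
    ad. apply Rmult_1_l.
  - assert (Hp := is_derive_RInt_param (fun u s => N (u + sg * (t - s)) s) 0 t x).
    eapply dR_eq. apply Hp.
    + apply loc_eps. exists d. split; auto. intros x' Hx' s Hs.
      eexists. apply (derive_comp_N M N Nx (fun z v => z + sg * (t - v)) 1); auto.
      apply Ht; auto. lra. ad.
    + intros s Hs. apply (cont_Derive_N M N Nx (fun z v => z + sg * (t - v)) 1); auto.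
      intros; c2d_aff. intros; ad. apply Ht; auto. lra.
    + apply loc_eps. exists d. split; auto. intros x' Hx'. apply ex_RInt_cont_R.
      intros s Hs. apply (cont_line M). intros u v Huv; apply HN; auto. apply Ht; auto. lra.
    + apply RInt_ext. intros s Hs. apply is_derive_unique.
      eapply dR_eq. apply (derive_comp_N M N Nx (fun z v => z + sg * (t - v)) 1); auto.
      apply Ht; auto. lra. ad. apply Rmult_1_l.
Qed.

Lemma S4 M sg f df N Nx x t a : (sg = 1 \/ sg = -1) -> FReg M f df -> NReg M N Nx -> Om M x t ->
  is_derive (fun tau => Phi sg f N (x + a * (tau - t)) tau) t ((a + sg) * DPhi sg df Nx x t + N x t).
Proof.
  intros Hsg Hf HN HO.
  destruct (tube M sg a x t Hsg HO) as [d [Hd Ht]].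
  assert (Hx0 : Rabs (x - x) < d) by (rewrite Rminus_eq_0, Rabs_R0; lra).
  assert (Ht0 : Rabs (t - t) < d) by (rewrite Rminus_eq_0, Rabs_R0; lra).
  set (G := fun z v => x + a * (z - t) + sg * (z - v)).
  assert (HGc : forall u v, continuity_2d_pt G u v) by (intros; unfold G; c2d_aff).
  assert (HGd : forall u v, is_derive (fun z => G z v) u (a + sg)) by (intros; unfold G; ad).
  assert (HGt : forall s, G t s = x + sg * (t - s)) by (intros; unfold G; ring).
  unfold Phi, DPhi.
  assert (Hint : is_derive (fun tau => RInt (fun s => N (G tau s) s) 0 tau) t
     (RInt (fun s => Derive (fun u => N (G u s) s) t) 0 t + N (G t t) t * 1)).
  { apply (is_derive_RInt_param_bound_comp_aux3 (fun u s => N (G u s) s) 0 (fun tau => tau) t 1).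
    - apply loc_eps. exists d. split; auto. intros y Hy. apply ex_RInt_cont_R.
      intros s Hs. apply (cont_line M sg N (x + a * (y - t)) y s). intros u v Huv; apply HN; auto.
      apply Ht; auto. lra.
    - assert (Hd2 : 0 < d / 2) by lra. exists (mkposreal _ Hd2). simpl.
      apply loc_eps. exists (d / 2). split; auto. intros y Hy. apply ex_RInt_cont_R.
      intros s Hs. apply (cont_line M sg N (x + a * (y - t)) y s). intros u v Huv; apply HN; auto.
      apply Ht; auto. lra. revert Hs. unfold Rmin, Rmax. repeat destruct Rle_dec; intros; lra.
    - ad.
    - assert (Hd2 : 0 < d / 2) by lra. exists (mkposreal _ Hd2). simpl.
      apply loc_eps. exists (d / 2). split; auto. intros y Hy s Hs.
      eexists. apply (derive_comp_N M N Nx G (a + sg)); auto.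
      apply Ht; auto. lra. revert Hs. unfold Rmin, Rmax. repeat destruct Rle_dec; intros; lra.
    - intros s Hs. apply (cont_Derive_N M N Nx G (a + sg)); auto. apply Ht; auto. lra.
    - assert (Hd2 : 0 < d / 2) by lra. exists (mkposreal _ Hd2). simpl. intros u v Hu Hv.
      apply (cont_Derive_N M N Nx G (a + sg)); auto. apply Ht; auto. lra.
      revert Hv. unfold Rmin, Rmax. repeat destruct Rle_dec; intros; unabs; lra.
    - apply continuity_pt_filterlim. apply (cont_line M sg N (x + a * (t - t)) t t).
      intros u v Huv; apply HN; auto. apply Ht; auto. unfold Rmin, Rmax. repeat destruct Rle_dec; lra. }
  assert (Hfp : is_derive (fun tau => f (x + a * (tau - t) + sg * tau)) t ((a + sg) * df (x + sg * t))).
  { apply (chain f (fun tau => x + a * (tau - t) + sg * tau) t (df (x + sg * t)) (a + sg)).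
    replace (x + a * (t - t) + sg * t) with (x + sg * t) by ring. apply Hf, Om_sg; auto. ad. }
  assert (HR : RInt (fun s => Derive (fun u => N (G u s) s) t) 0 t =
               (a + sg) * RInt (fun s => Nx (x + sg * (t - s)) s) 0 t).
  { rewrite (RInt_ext _ (fun s => (a + sg) * Nx (x + sg * (t - s)) s)).
    apply (RInt_scal (V := R_CompleteNormedModule)). apply ex_RInt_cont_R.
    intros s Hs. apply (cont_line M sg Nx x t s). intros u v Huv; apply HN; auto.
    replace (x + sg * (t - s)) with (x + a * (t - t) + sg * (t - s)) by ring. apply Ht; auto. lra.
    intros s Hs. apply is_derive_unique. rewrite <- HGt.
    apply (derive_comp_N M N Nx G (a + sg)); auto. apply Ht; auto. lra. }
  assert (HNt : N (G t t) t = N x t) by (replace (G t t) with x by (unfold G; ring); reflexivity).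
  eapply dR_eq. apply (dR_plus _ _ t _ _ Hfp Hint).
  rewrite HR, HNt. rR; ring.
Qed.


Definition Reg M (phi : R -> R -> R) := forall x t, Om M x t ->
  continuity_2d_pt phi x t /\ ex_derive (fun z => phi z t) x /\
  continuity_2d_pt (fun u v => Derive (fun z => phi z v) u) x t /\
  (forall a, is_derive (fun tau => phi (x + a * (tau - t)) tau) t
     (a * Derive (fun z => phi z t) x + Derive (fun s => phi x s) t)).

Lemma Reg_const M c : Reg M (fun _ _ => c).
Proof.
  intros x t HO. split. apply continuity_2d_pt_const. split. exists 0. ad.
  split. apply continuity_2d_pt_ext with (fun _ _ => 0). intros u v. symmetry. apply Derive_const.
  apply continuity_2d_pt_const.
  intros a. rewrite !Derive_const. eapply dR_eq. apply (is_derive_const (K := R_AbsRing) c). rR; simpl. unfold zero; simpl. ring.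
Qed.

Lemma S5 M sg f df N Nx : (sg = 1 \/ sg = -1) -> FReg M f df -> NReg M N Nx ->
  Reg M (Phi sg f N) /\ forall x t, Om M x t ->
    Derive (fun z => Phi sg f N z t) x = DPhi sg df Nx x t /\
    Derive (fun s => Phi sg f N x s) t = sg * DPhi sg df Nx x t + N x t.
Proof.
  intros Hsg Hf HN.
  assert (Hfor : forall x t, Om M x t ->
    Derive (fun z => Phi sg f N z t) x = DPhi sg df Nx x t /\
    Derive (fun s => Phi sg f N x s) t = sg * DPhi sg df Nx x t + N x t).
  { intros x t HO. split. apply is_derive_unique. apply S3 with M; auto.
    apply is_derive_unique. apply (is_derive_ext (fun tau => Phi sg f N (x + 0 * (tau - t)) tau)).
    intros tau. simpl. replace (x + 0 * (tau - t)) with x by ring. reflexivity.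
    eapply dR_eq. apply (S4 M sg f df N Nx x t 0); auto. rR; ring. }
  split; auto.
  intros x t HO. destruct (S1 M sg f df N Nx x t Hsg Hf HN HO) as [C1 C2].
  split; auto. split. exists (DPhi sg df Nx x t). apply (S3 M sg f df N Nx); auto.
  split.
  - apply continuity_2d_pt_ext_loc with (DPhi sg df Nx); auto.
    destruct (Om_open M x t HO) as [d [Hd Hd']]. exists (mkposreal d Hd). simpl.
    intros u v Hu Hv. symmetry. apply Hfor. apply Hd'; auto.
  - intros a. destruct (Hfor x t HO) as [E1 E2]. rewrite E1, E2.
    eapply dR_eq. apply (S4 M sg f df N Nx); auto. rR; ring.
Qed.

Lemma Reg_ext M (phi phi' : R -> R -> R) : (forall x t, phi x t = phi' x t) -> Reg M phi -> Reg M phi'.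
Proof.
  intros H HR. assert (E : phi = phi').
  { apply functional_extensionality. intros x. apply functional_extensionality. intros t. auto. }
  subst. auto.
Qed.

Lemma FReg_C4 M f : 0 < M -> C4_closed_ball f M -> FReg M f (Derive f).
Proof.
  intros HM Hf y Hy. destruct (Hf 1%nat) as [H1 [h [Hh1 Hh2]]]. lia.
  split.
  - apply Derive_correct. exact (H1 y Hy).
  - apply continuous_ext_loc with h.
    apply loc_eps. exists (M - Rabs y). split. lra. intros z Hz. apply Hh1.
    pose proof (Rabs_triang_inv z y). pose proof (Rabs_triang (z - y) y).
    replace (z - y + y) with z in H0 by ring. lra.
    specialize (Hh2 y (Rlt_le _ _ Hy)).
    intros P HP. specialize (Hh2 P HP). simpl in Hh2. unfold filtermap, within in Hh2.
    assert (HD : locally y (fun z => Rabs z <= M)).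
    { apply loc_eps. exists (M - Rabs y). split. lra. intros z Hz.
      pose proof (Rabs_triang (z - y) y). replace (z - y + y) with z in H by ring. lra. }
    unfold filtermap. eapply filter_imp. 2: apply (filter_and _ _ HD Hh2).
    intros z [Hz1 Hz2]. apply Hz2; auto.
Qed.


Lemma dR_minus (f g : R -> R) x df dg : is_derive f x df -> is_derive g x dg ->
  is_derive (fun z => f z - g z) x (df - dg).
Proof. intros. exact (@is_derive_minus R_AbsRing R_NormedModule f g x df dg H H0). Qed.

Lemma dR_scal (f : R -> R) x k df : is_derive f x df -> is_derive (fun z => k * f z) x (k * df).
Proof. intros. apply is_derive_scal; auto. Qed.

Definition Dx (phi : R -> R -> R) := fun x t => Derive (fun z => phi z t) x.
Definition Dt (phi : R -> R -> R) := fun x t => Derive (fun s => phi x s) t.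

Definition NxF p mu (phi psi : R -> R -> R) := fun x t =>
  Rpower 2 (- p) * (dpow p (phi x t + psi x t) * (Dx phi x t + Dx psi x t))
  - mu / (1 + t) * ((Dx phi x t + Dx psi x t) / 2).

Lemma cont_inv1 mu t : 0 < 1 + t -> continuous (fun s => mu / (1 + s)) t.
Proof.
  intros H. apply (@ex_derive_continuous R_AbsRing R_NormedModule).
  auto_derive. lra.
Qed.

Lemma NReg_Nonlin M p mu phi psi : 1 < p -> Reg M phi -> Reg M psi ->
  NReg M (Nonlin p mu phi psi) (NxF p mu phi psi).
Proof.
  intros Hp Hphi Hpsi x t HO.
  destruct (Hphi x t HO) as [A1 [A2 [A3 A4]]].
  destruct (Hpsi x t HO) as [B1 [B2 [B3 B4]]].
  assert (Ht : 0 < 1 + t) by (destruct HO as [_ [_ H]]; lra).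
  assert (Cu : continuity_2d_pt (fun a b => phi a b + psi a b) x t) by (apply continuity_2d_pt_plus; auto).
  assert (Cm : continuity_2d_pt (fun a b => mu / (1 + b)) x t).
  { apply (c2d_of_1d (fun s => mu / (1 + s)) (fun a b => b)). apply cont_inv1; auto. c2d_aff. }
  split; [|split].
  - unfold Nonlin. apply continuity_2d_pt_minus. apply continuity_2d_pt_mult. apply continuity_2d_pt_const.
    apply (c2d_of_1d (fun y => powabs y p) (fun a b => phi a b + psi a b)). apply powabs_cont; lra. auto.
    apply continuity_2d_pt_mult. auto. apply continuity_2d_pt_mult. auto. apply continuity_2d_pt_const.
  - unfold NxF, Dx. apply continuity_2d_pt_minus. apply continuity_2d_pt_mult. apply continuity_2d_pt_const.
    apply continuity_2d_pt_mult.
    apply (c2d_of_1d (dpow p) (fun a b => phi a b + psi a b)). apply dpow_cont; lra. auto.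
    apply continuity_2d_pt_plus; auto.
    apply continuity_2d_pt_mult. auto. apply continuity_2d_pt_mult. apply continuity_2d_pt_plus; auto.
    apply continuity_2d_pt_const.
  - unfold Nonlin, NxF, Dx.
    assert (Hu : is_derive (fun z => phi z t + psi z t) x (Derive (fun z => phi z t) x + Derive (fun z => psi z t) x)).
    { apply dR_plus; apply Derive_correct; auto. }
    eapply dR_eq. apply dR_minus. apply dR_scal.
    apply (chain (fun y => powabs y p) (fun z => phi z t + psi z t)). apply powabs_derive; auto. exact Hu.
    apply dR_scal. apply (is_derive_ext (fun z => / 2 * (phi z t + psi z t))).
    intros; unfold Rdiv; rR; ring. apply (dR_scal (fun z => phi z t + psi z t)). exact Hu.
    rR. unfold Rdiv. ring.
Qed.


Lemma dR_mult (f g : R -> R) x df dg : is_derive f x df -> is_derive g x dg ->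
  is_derive (fun z => f z * g z) x (df * g x + f x * dg).
Proof. intros. apply (@is_derive_mult R_AbsRing f g x df dg H H0). intros; apply Rmult_comm. Qed.

Lemma mono_path (w dw h : R -> R) c t d : 0 <= t -> 0 < d ->
  (forall tau, 0 <= tau <= t -> is_derive w tau (dw tau)) ->
  (forall tau, - d < tau < t + d -> continuous h tau) ->
  (forall tau, 0 <= tau <= t -> 0 <= dw tau + c * h tau) ->
  w 0 <= w t + c * RInt h 0 t.
Proof.
  intros Ht Hd Hw Hh Hpos.
  assert (HI : forall tau, 0 <= tau <= t -> is_derive (fun z => RInt h 0 z) tau (h tau)).
  { intros tau Htau. apply (is_derive_RInt (V := R_CompleteNormedModule) h (fun z => RInt h 0 z) 0 tau).
    apply loc_eps. exists d. split; auto. intros b Hb. apply (RInt_correct (V := R_CompleteNormedModule)).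
    apply ex_RInt_cont_R. intros z Hz. apply Hh. revert Hz. unabs. unfold Rmin, Rmax. destruct Rle_dec; intros; lra.
    apply Hh. lra. }
  set (Q := fun z => w z + c * RInt h 0 z).
  assert (HQ : forall tau, 0 <= tau <= t -> is_derive Q tau (dw tau + c * h tau)).
  { intros tau Htau. unfold Q. apply dR_plus. auto. apply dR_scal. auto. }
  destruct (MVT_gen Q 0 t (fun tau => dw tau + c * h tau)) as [xi [Hxi HE]].
  - intros z Hz. rewrite Rmin_left in Hz by lra. rewrite Rmax_right in Hz by lra. apply HQ; lra.
  - intros z Hz. rewrite Rmin_left in Hz by lra. rewrite Rmax_right in Hz by lra.
    apply continuity_pt_filterlim. apply (@ex_derive_continuous R_AbsRing R_NormedModule).
    eexists. apply HQ; lra.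
  - rewrite Rmin_left in Hxi by lra. rewrite Rmax_right in Hxi by lra.
    unfold Q in HE. rewrite RInt_point in HE. unfold zero in HE; simpl in HE.
    specialize (Hpos xi Hxi). assert (0 <= (dw xi + c * h xi) * (t - 0)) by (apply Rmult_le_pos; lra).
    lra.
Qed.

Lemma div_le mu s : 0 < mu -> 0 <= s -> mu / (1 + s) <= mu.
Proof.
  intros. unfold Rdiv. apply Rmult_le_reg_r with (1 + s). lra.
  rewrite Rmult_assoc, Rinv_l by lra. nra.
Qed.
Lemma Rpower_pos x y : 0 < Rpower x y.
Proof. unfold Rpower; apply exp_pos. Qed.

Lemma gam_bound p mu G : 1 < p -> 0 < mu -> Rpower (mu * p * Rpower 2 p) (/ (p - 1)) < G ->
  mu * p * Rpower 2 p < Rpower G (p - 1).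
Proof.
  intros Hp Hmu H.
  assert (HX : 0 < mu * p * Rpower 2 p) by (apply Rmult_lt_0_compat; [nra| apply Rpower_pos]).
  replace (mu * p * Rpower 2 p) with (Rpower (Rpower (mu * p * Rpower 2 p) (/ (p - 1))) (p - 1)).
  apply Rlt_Rpower_l. lra. split; auto. apply Rpower_pos.
  rewrite Rpower_mult. rewrite Rinv_l by lra. apply Rpower_1; auto.
Qed.

Lemma K1 p mu G u s : 1 < p -> 0 < mu -> 0 < G -> mu * p * Rpower 2 p < Rpower G (p - 1) ->
  G <= u -> 0 <= s -> 0 <= Rpower 2 (- p) * dpow p u - mu / (1 + s) / 2.
Proof.
  intros Hp Hmu HG Hb Hu Hs. unfold dpow.
  destruct (Rle_dec 0 u) as [_|]; [|lra].
  rewrite powabs_nz by lra. rewrite Rabs_pos_eq by lra.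
  assert (H1 : Rpower G (p - 1) <= Rpower u (p - 1)) by (apply Rle_Rpower_l; lra).
  assert (H2 : Rpower 2 (- p) * Rpower 2 p = 1).
  { rewrite <- Rpower_plus. replace (- p + p) with 0 by ring. apply Rpower_O; lra. }
  assert (H3 : 0 < Rpower 2 (- p)) by apply Rpower_pos.
  assert (H4 : mu / (1 + s) / 2 <= mu / 2).
  { pose proof (div_le mu s Hmu Hs). lra. }
  assert (H5 : Rpower 2 (- p) * (mu * p * Rpower 2 p) = mu * p).
  { replace (Rpower 2 (- p) * (mu * p * Rpower 2 p)) with (mu * p * (Rpower 2 (- p) * Rpower 2 p)) by ring.
    rewrite H2; ring. }
  assert (H6 : Rpower 2 (- p) * (mu * p * Rpower 2 p) * p <= Rpower 2 (- p) * Rpower u (p - 1) * p).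
  { apply Rmult_le_compat_r. lra. apply Rmult_le_compat_l. lra. lra. }
  rewrite H5 in H6. assert (1 < p * p) by nra. assert (mu * 1 <= mu * (p * p)) by (apply Rmult_le_compat_l; lra). rewrite Rmult_1_r. lra.
Qed.

Lemma K2 p mu G u s : 1 < p -> 0 < mu -> 0 < G -> mu * p * Rpower 2 p < Rpower G (p - 1) ->
  G <= u -> 0 <= s ->
  Rpower 2 (- p) * Rpower G p - mu / 2 * G <= Rpower 2 (- p) * powabs u p - mu / (1 + s) * (u / 2).
Proof.
  intros Hp Hmu HG Hb Hu Hs.
  rewrite powabs_nz by lra. rewrite Rabs_pos_eq by lra.
  set (m := fun z => Rpower 2 (- p) * Rpower z p - mu / 2 * z).
  assert (Hm : m G <= m u).
  { destruct (Req_dec G u) as [->|Hne]. lra.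
    destruct (MVT_gen m G u (fun z => Rpower 2 (- p) * (p * Rpower z (p - 1)) - mu / 2)) as [xi [Hxi HE]].
    - intros z Hz. rewrite Rmin_left in Hz by lra. rewrite Rmax_right in Hz by lra. unfold m.
      apply dR_minus. apply dR_scal. apply is_derive_Reals. apply derivable_pt_lim_power. lra.
      eapply dR_eq. apply (dR_scal (fun z => z)). apply (is_derive_id (K := R_AbsRing)). rR; unfold one; simpl; ring.
    - intros z Hz. rewrite Rmin_left in Hz by lra. rewrite Rmax_right in Hz by lra.
      apply continuity_pt_filterlim. apply (@ex_derive_continuous R_AbsRing R_NormedModule).
      unfold m. auto_derive; repeat split; try lra. exists (p * Rpower z (p - 1)). apply is_derive_Reals, derivable_pt_lim_power; lra.
    - rewrite Rmin_left in Hxi by lra. rewrite Rmax_right in Hxi by lra.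
      assert (Hk := K1 p mu G xi 0 Hp Hmu HG Hb (proj1 Hxi) (Rle_refl 0)).
      unfold dpow in Hk. destruct (Rle_dec 0 xi); [|lra]. rewrite powabs_nz in Hk by lra.
      rewrite Rabs_pos_eq in Hk by lra. replace (1 + 0) with 1 in Hk by ring.
      assert (0 <= (Rpower 2 (- p) * (p * Rpower xi (p - 1)) - mu / 2) * (u - G)).
      { apply Rmult_le_pos; lra. }
      lra. }
  unfold m in Hm.
  assert (H4 : mu / (1 + s) <= mu) by (apply div_le; auto).
  assert (mu / (1 + s) * (u / 2) <= mu * (u / 2)) by (apply Rmult_le_compat_r; lra).
  lra.
Qed.


Lemma final_arith sg F I Nv A w0 eps : (sg = 1 \/ sg = -1) -> 0 < eps ->
  w0 <= Nv + (- eps * sg) * I -> w0 <= Nv + ((2 + eps) * sg) * I -> A <= w0 ->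
  (2 + eps) * Rabs F <= A -> (1 + eps) * Rabs (F + I) <= sg * (F + I) + Nv.
Proof.
  intros Hsg He M1 M2 HA HF.
  assert (H1 : 0 <= eps * (Rabs F - F)) by (apply Rmult_le_pos; [lra| pose proof (Rle_abs F); lra]).
  assert (H2 : 0 <= eps * (Rabs F + F)).
  { apply Rmult_le_pos. lra. pose proof (Rle_abs (- F)). rewrite Rabs_Ropp in H. lra. }
  destruct (Rle_dec 0 (F + I)) as [Hp|Hn].
  - rewrite (Rabs_pos_eq (F + I)) by lra.
    assert (H3 : 0 <= eps * (F + I)) by (apply Rmult_le_pos; lra).
    destruct Hsg as [-> | ->]; nra.
  - rewrite (Rabs_left (F + I)) by lra.
    assert (H3 : 0 <= eps * (- (F + I))) by (apply Rmult_le_pos; lra).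
    destruct Hsg as [-> | ->]; nra.
Qed.

Lemma dinv mu tau : 0 < 1 + tau -> is_derive (fun z => mu / (1 + z)) tau (- mu / (1 + tau) ^ 2).
Proof. intros H. auto_derive. lra. rR. field. lra. Qed.

Definition IH M G eps (phi psi : R -> R -> R) := forall x t, Om M x t -> 0 <= t ->
  G <= phi x t + psi x t /\ (1 + eps) * Rabs (Dx phi x t) <= Dt phi x t /\
  (1 + eps) * Rabs (Dx psi x t) <= Dt psi x t.

Lemma ineq_step M p mu G A eps sg phi psi f df x t :
  (sg = 1 \/ sg = -1) -> 1 < p -> 0 < mu -> 0 < eps -> 0 < G ->
  mu * p * Rpower 2 p < Rpower G (p - 1) ->
  A = Rpower 2 (- p) * Rpower G p - mu / 2 * G ->
  Reg M phi -> Reg M psi -> IH M G eps phi psi ->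
  FReg M f df -> (forall y, Rabs y < M -> (2 + eps) * Rabs (df y) <= A) ->
  Om M x t -> 0 <= t ->
  (1 + eps) * Rabs (DPhi sg df (NxF p mu phi psi) x t) <=
    sg * DPhi sg df (NxF p mu phi psi) x t + Nonlin p mu phi psi x t.
Proof.
  intros Hsg Hp Hmu He HG Hb HA Rphi Rpsi HI Hf HfA HO Ht0.
  assert (HN := NReg_Nonlin M p mu phi psi Hp Rphi Rpsi).
  set (N := Nonlin p mu phi psi) in *. set (Nx := NxF p mu phi psi) in *.
  destruct (tube0 M sg x t Hsg HO) as [d [Hd Ht']].
  assert (HP : forall tau, - d < tau < t + d -> Om M (x + sg * (t - tau)) tau).
  { intros tau Htau. apply Ht'. rewrite Rminus_eq_0, Rabs_R0; lra. rewrite Rminus_eq_0, Rabs_R0; lra.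
    rewrite Rmin_left, Rmax_right by lra. lra. }
  set (X := fun tau => x + sg * (t - tau)).
  set (U := fun tau => phi (X tau) tau + psi (X tau) tau).
  set (ux := fun tau => Dx phi (X tau) tau + Dx psi (X tau) tau).
  set (ut := fun tau => Dt phi (X tau) tau + Dt psi (X tau) tau).
  set (kk := fun tau => Rpower 2 (- p) * dpow p (U tau) - mu / (1 + tau) / 2).
  set (dw := fun tau => kk tau * (- sg * ux tau + ut tau) + mu / (1 + tau) ^ 2 * (U tau / 2)).
  set (w := fun tau => N (X tau) tau).
  set (h := fun tau => Nx (X tau) tau).
  assert (Hw : forall tau, 0 <= tau <= t -> is_derive w tau (dw tau)).
  { intros tau Htau. assert (HOt : Om M (X tau) tau) by (apply HP; lra).
    assert (H1t : 0 < 1 + tau) by lra.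
    assert (Hl : forall (phi : R -> R -> R), Reg M phi ->
      is_derive (fun z => phi (X z) z) tau (- sg * Dx phi (X tau) tau + Dt phi (X tau) tau)).
    { intros ph Rph. destruct (Rph (X tau) tau HOt) as [_ [_ [_ Hd4]]].
      specialize (Hd4 (- sg)). eapply is_derive_ext. 2: exact Hd4.
      intros z. simpl. unfold X. f_equal. ring. }
    assert (HU : is_derive U tau (- sg * ux tau + ut tau)).
    { eapply dR_eq. apply dR_plus; apply Hl; auto. unfold ux, ut. rR; ring. }
    unfold w, N, Nonlin. eapply dR_eq. apply dR_minus. apply dR_scal.
    apply (chain (fun y => powabs y p) U). apply powabs_derive; auto. exact HU.
    apply (dR_mult (fun z => mu / (1 + z)) (fun z => U z / 2)). apply dinv; auto.
    apply (is_derive_ext (fun z => / 2 * U z)). intros; unfold Rdiv; rR; ring.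
    apply (dR_scal U). exact HU.
    unfold dw, kk. fold (U tau). rR. field. lra. }
  assert (Hh : forall tau, - d < tau < t + d -> continuous h tau).
  { intros tau Htau. apply (cont_line M sg Nx x t tau). intros u v Huv; apply HN; auto. apply HP; auto. }
  assert (Hpos : forall c0, (forall tau, 0 <= tau <= t -> 0 <= ut tau - sg * ux tau + c0 * ux tau) ->
     forall tau, 0 <= tau <= t -> 0 <= dw tau + c0 * h tau).
  { intros c0 Hc tau Htau.
    assert (HOt : Om M (X tau) tau) by (apply HP; lra).
    destruct (HI (X tau) tau HOt (proj1 Htau)) as [HU _].
    assert (Hk : 0 <= kk tau) by (apply (K1 p mu G); auto; lra).
    assert (Eh : h tau = kk tau * ux tau).
    { unfold h, Nx, NxF, kk, ux, U. rR. field. lra. }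
    rewrite Eh.
    replace (dw tau + c0 * (kk tau * ux tau)) with
       (kk tau * (ut tau - sg * ux tau + c0 * ux tau) + mu / (1 + tau) ^ 2 * (U tau / 2))
      by (unfold dw; ring).
    apply Rplus_le_le_0_compat. apply Rmult_le_pos; [exact Hk | apply Hc; exact Htau].
    apply Rmult_le_pos. unfold Rdiv. apply Rmult_le_pos. lra. left. apply Rinv_0_lt_compat.
    apply pow_lt. lra. unfold U in HU |- *. lra. }
  assert (Habs : forall tau, 0 <= tau <= t -> (1 + eps) * Rabs (ux tau) <= ut tau).
  { intros tau Htau. assert (HOt : Om M (X tau) tau) by (apply HP; lra).
    destruct (HI (X tau) tau HOt (proj1 Htau)) as [_ [A1 A2]].
    unfold ux, ut. pose proof (Rabs_triang (Dx phi (X tau) tau) (Dx psi (X tau) tau)).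
    assert ((1 + eps) * Rabs (Dx phi (X tau) tau + Dx psi (X tau) tau) <=
            (1 + eps) * (Rabs (Dx phi (X tau) tau) + Rabs (Dx psi (X tau) tau))).
    { apply Rmult_le_compat_l; lra. }
    lra. }
  assert (M1 : w 0 <= w t + (- eps * sg) * RInt h 0 t).
  { apply (mono_path w dw h (- eps * sg) t d); auto. apply Hpos. intros tau Htau.
    specialize (Habs tau Htau). pose proof (Rle_abs (ux tau)). pose proof (Rle_abs (- ux tau)).
    rewrite Rabs_Ropp in H0. assert (0 <= eps * (Rabs (ux tau) - ux tau)) by (apply Rmult_le_pos; lra).
    assert (0 <= eps * (Rabs (ux tau) + ux tau)) by (apply Rmult_le_pos; lra).
    destruct Hsg as [-> | ->]; nra. }
  assert (M2 : w 0 <= w t + ((2 + eps) * sg) * RInt h 0 t).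
  { apply (mono_path w dw h ((2 + eps) * sg) t d); auto. apply Hpos. intros tau Htau.
    specialize (Habs tau Htau). pose proof (Rle_abs (ux tau)). pose proof (Rle_abs (- ux tau)).
    rewrite Rabs_Ropp in H0. assert (0 <= eps * (Rabs (ux tau) - ux tau)) by (apply Rmult_le_pos; lra).
    assert (0 <= eps * (Rabs (ux tau) + ux tau)) by (apply Rmult_le_pos; lra).
    destruct Hsg as [-> | ->]; nra. }
  assert (Ewt : w t = N x t) by (unfold w, X; replace (x + sg * (t - t)) with x by ring; reflexivity).
  assert (Hw0 : A <= w 0).
  { assert (HO0 : Om M (X 0) 0) by (apply HP; lra).
    destruct (HI (X 0) 0 HO0 (Rle_refl 0)) as [HU0 _].
    unfold w, N, Nonlin. rewrite HA. apply (K2 p mu G); auto. lra. }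
  assert (ED : DPhi sg df Nx x t = df (x + sg * t) + RInt h 0 t) by reflexivity.
  rewrite ED. rewrite Ewt in M1, M2.
  apply (final_arith sg _ _ _ A (w 0) eps); auto.
  apply HfA. apply Om_sg; auto.
Qed.


Lemma int_nonneg M p mu G A sg phi psi x t :
  (sg = 1 \/ sg = -1) -> 1 < p -> 0 < mu -> 0 < G ->
  mu * p * Rpower 2 p < Rpower G (p - 1) ->
  A = Rpower 2 (- p) * Rpower G p - mu / 2 * G -> 0 <= A ->
  Reg M phi -> Reg M psi -> (forall x t, Om M x t -> 0 <= t -> G <= phi x t + psi x t) ->
  Om M x t -> 0 <= t ->
  0 <= RInt (fun s => Nonlin p mu phi psi (x + sg * (t - s)) s) 0 t.
Proof.
  intros Hsg Hp Hmu HG Hb HA HA0 Rphi Rpsi HI HO Ht.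
  assert (HN := NReg_Nonlin M p mu phi psi Hp Rphi Rpsi).
  destruct (tube0 M sg x t Hsg HO) as [d [Hd Ht']].
  assert (HP : forall tau, 0 <= tau <= t -> Om M (x + sg * (t - tau)) tau).
  { intros tau Htau. apply Ht'. rewrite Rminus_eq_0, Rabs_R0; lra. rewrite Rminus_eq_0, Rabs_R0; lra.
    rewrite Rmin_left, Rmax_right by lra. lra. }
  apply RInt_ge_0; auto.
  apply ex_RInt_cont_R. intros s Hs. rewrite Rmin_left, Rmax_right in Hs by lra.
  apply (cont_line M sg (Nonlin p mu phi psi) x t s). intros u v Huv; apply HN; auto. apply HP; auto.
  intros s Hs. unfold Nonlin. eapply Rle_trans. apply HA0. rewrite HA. apply (K2 p mu G); auto.
  apply HI. apply HP; lra. lra. lra.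
Qed.

Lemma phi_S p mu g1 g2 f g n :
  phi_n p mu g1 g2 f g (S n) = Phi 1 f (Nonlin p mu (phi_n p mu g1 g2 f g n) (psi_n p mu g1 g2 f g n)).
Proof.
  apply functional_extensionality; intros x. apply functional_extensionality; intros t.
  unfold phi_n, psi_n, Phi. simpl. destruct (iterates p mu g1 g2 f g n) as [ph ps]. simpl.
  replace (x + 1 * t) with (x + t) by ring. f_equal. apply RInt_ext. intros s _.
  replace (x + 1 * (t - s)) with (x + t - s) by ring. reflexivity.
Qed.

Lemma psi_S p mu g1 g2 f g n :
  psi_n p mu g1 g2 f g (S n) = Phi (-1) g (Nonlin p mu (phi_n p mu g1 g2 f g n) (psi_n p mu g1 g2 f g n)).
Proof.
  apply functional_extensionality; intros x. apply functional_extensionality; intros t.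
  unfold phi_n, psi_n, Phi. simpl. destruct (iterates p mu g1 g2 f g n) as [ph ps]. simpl.
  replace (x + -1 * t) with (x - t) by ring. f_equal. apply RInt_ext. intros s _.
  replace (x + -1 * (t - s)) with (x - t + s) by ring. reflexivity.
Qed.

Lemma Dx_const c x t : Dx (fun _ _ => c) x t = 0.
Proof. unfold Dx. apply Derive_const. Qed.
Lemma Dt_const c x t : Dt (fun _ _ => c) x t = 0.
Proof. unfold Dt. apply Derive_const. Qed.

Lemma main_ind M p mu g1 g2 eps f g :
  0 < M -> 1 < p -> 0 < mu -> 0 < g1 -> 0 < g2 -> 0 < eps ->
  mu * p * Rpower 2 p < Rpower (g1 + g2) (p - 1) ->
  0 <= Rpower 2 (- p) * Rpower (g1 + g2) p - mu / 2 * (g1 + g2) ->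
  (forall x, Rabs x < M -> g1 <= f x) -> (forall x, Rabs x < M -> g2 <= g x) ->
  FReg M f (Derive f) -> FReg M g (Derive g) ->
  (forall y, Rabs y < M -> (2 + eps) * Rabs (Derive f y) <= Rpower 2 (- p) * Rpower (g1 + g2) p - mu / 2 * (g1 + g2)) ->
  (forall y, Rabs y < M -> (2 + eps) * Rabs (Derive g y) <= Rpower 2 (- p) * Rpower (g1 + g2) p - mu / 2 * (g1 + g2)) ->
  forall n, Reg M (phi_n p mu g1 g2 f g n) /\ Reg M (psi_n p mu g1 g2 f g n) /\
    IH M (g1 + g2) eps (phi_n p mu g1 g2 f g n) (psi_n p mu g1 g2 f g n).
Proof.
  intros HM Hp Hmu Hg1 Hg2 He Hb HA0 Hf1 Hg1' Hf Hg HfA HgA n.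
  induction n as [|n [R1 [R2 HI]]].
  - split; [|split].
    + exact (Reg_const M g1).
    + exact (Reg_const M g2).
    + intros x t _ _. change (g1 + g2 <= g1 + g2 /\ (1 + eps) * Rabs (Dx (fun _ _ => g1) x t) <= Dt (fun _ _ => g1) x t /\
        (1 + eps) * Rabs (Dx (fun _ _ => g2) x t) <= Dt (fun _ _ => g2) x t).
      rewrite !Dx_const, !Dt_const, Rabs_R0. lra.
  - rewrite phi_S, psi_S.
    set (N := Nonlin p mu (phi_n p mu g1 g2 f g n) (psi_n p mu g1 g2 f g n)).
    assert (HN := NReg_Nonlin M p mu _ _ Hp R1 R2).
    destruct (S5 M 1 f (Derive f) N _ (or_introl eq_refl) Hf HN) as [Q1 F1].
    destruct (S5 M (-1) g (Derive g) N _ (or_intror eq_refl) Hg HN) as [Q2 F2].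
    split; [auto|split; [auto|]].
    intros x t HO Ht. destruct (F1 x t HO) as [E1 E2]. destruct (F2 x t HO) as [E3 E4].
    unfold Dx, Dt. rewrite E1, E2, E3, E4. split; [|split].
    + unfold Phi. pose proof (Om_sg M 1 x t (or_introl eq_refl) HO).
      pose proof (Om_sg M (-1) x t (or_intror eq_refl) HO).
      pose proof (Hf1 _ H). pose proof (Hg1' _ H0).
      assert (I1 := int_nonneg M p mu (g1 + g2) (Rpower 2 (- p) * Rpower (g1 + g2) p - mu / 2 * (g1 + g2)) 1 _ _ x t (or_introl eq_refl) Hp Hmu ltac:(lra) Hb eq_refl HA0 R1 R2
        (fun x t H1 H2 => proj1 (HI x t H1 H2)) HO Ht).
      assert (I2 := int_nonneg M p mu (g1 + g2) (Rpower 2 (- p) * Rpower (g1 + g2) p - mu / 2 * (g1 + g2)) (-1) _ _ x t (or_intror eq_refl) Hp Hmu ltac:(lra) Hb eq_refl HA0 R1 R2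
        (fun x t H1 H2 => proj1 (HI x t H1 H2)) HO Ht).
      unfold N. lra.
    + apply (ineq_step M p mu (g1 + g2) (Rpower 2 (- p) * Rpower (g1 + g2) p - mu / 2 * (g1 + g2)) eps 1 _ _ f (Derive f) x t (or_introl eq_refl)); auto. lra.
    + apply (ineq_step M p mu (g1 + g2) (Rpower 2 (- p) * Rpower (g1 + g2) p - mu / 2 * (g1 + g2)) eps (-1) _ _ g (Derive g) x t (or_intror eq_refl)); auto. lra.
Qed.


Lemma Reg_ex_t M phi x t : Reg M phi -> Om M x t -> ex_derive (fun s => phi x s) t.
Proof.
  intros HR HO. destruct (HR x t HO) as [_ [_ [_ H]]]. specialize (H 0).
  eexists. eapply is_derive_ext. 2: exact H. intros tau. simpl. f_equal. ring.
Qed.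

Theorem lemma4p2
  (p mu Rs Ts gamma1 gamma2 eps0 : R) (f g : R -> R)
  (Hp : 1 < p) (Hmu : 0 < mu) (Hpmu : p < 1 + 2 / mu)
  (HRs : 0 < Rs) (HTs : 0 < Ts)
  (Hg1 : 0 < gamma1) (Hg2 : 0 < gamma2)
  (Hgam : Rmax 1 (Rpower (mu * p * Rpower 2 p) (/ (p - 1))) < gamma1 + gamma2)
  (* (A2) *)
  (HA2f : forall x, Rabs x < Rs + Ts -> gamma1 <= f x)
  (HA2g : forall x, Rabs x < Rs + Ts -> gamma2 <= g x)
  (* (A3) *)
  (HA3f : C4_closed_ball f (Rs + Ts))
  (HA3g : C4_closed_ball g (Rs + Ts))
  (* (A4) *)
  (Heps0 : 0 < eps0)
  (HA4 : forall x, Rabs x < Rs + Ts ->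
     (2 + eps0) * (Rabs (Derive f x) + Rabs (Derive g x))
       <= Rpower 2 (- p) * Rpower (gamma1 + gamma2) p - mu / 2 * (gamma1 + gamma2)) :
  forall (n : nat) (x t : R), in_K Rs Ts x t ->
    let phi := phi_n p mu gamma1 gamma2 f g n in
    let psi := psi_n p mu gamma1 gamma2 f g n in
    ex_derive (fun s => phi x s) t /\ ex_derive (fun y => phi y t) x /\
    ex_derive (fun s => psi x s) t /\ ex_derive (fun y => psi y t) x /\
    Derive (fun s => phi x s) t >= (1 + eps0) * Rabs (Derive (fun y => phi y t) x) /\
    Derive (fun s => psi x s) t >= (1 + eps0) * Rabs (Derive (fun y => psi y t) x).
Proof.
  intros n x t HK phi psi.
  set (M := Rs + Ts).
  assert (HM : 0 < M) by (unfold M; lra).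
  assert (Hb : mu * p * Rpower 2 p < Rpower (gamma1 + gamma2) (p - 1)).
  { apply gam_bound; auto. eapply Rle_lt_trans. apply Rmax_r. exact Hgam. }
  assert (HA0 : 0 <= Rpower 2 (- p) * Rpower (gamma1 + gamma2) p - mu / 2 * (gamma1 + gamma2)).
  { eapply Rle_trans. 2: apply (HA4 0). apply Rmult_le_pos. lra.
    pose proof (Rabs_pos (Derive f 0)); pose proof (Rabs_pos (Derive g 0)); lra.
    rewrite Rabs_R0; lra. }
  assert (HfA : forall y, Rabs y < M -> (2 + eps0) * Rabs (Derive f y) <=
     Rpower 2 (- p) * Rpower (gamma1 + gamma2) p - mu / 2 * (gamma1 + gamma2)).
  { intros y Hy. eapply Rle_trans. 2: apply (HA4 y Hy). apply Rmult_le_compat_l. lra.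
    pose proof (Rabs_pos (Derive g y)); lra. }
  assert (HgA : forall y, Rabs y < M -> (2 + eps0) * Rabs (Derive g y) <=
     Rpower 2 (- p) * Rpower (gamma1 + gamma2) p - mu / 2 * (gamma1 + gamma2)).
  { intros y Hy. eapply Rle_trans. 2: apply (HA4 y Hy). apply Rmult_le_compat_l. lra.
    pose proof (Rabs_pos (Derive f y)); lra. }
  destruct (main_ind M p mu gamma1 gamma2 eps0 f g HM Hp Hmu Hg1 Hg2 Heps0 Hb HA0 HA2f HA2g
     (FReg_C4 M f HM HA3f) (FReg_C4 M g HM HA3g) HfA HgA n) as [R1 [R2 HI]].
  assert (HO : Om M x t).
  { destruct HK as [Ht [x0 [H1 H2]]]. unfold Om, M. unabs. repeat split; try apply Rabs_def1; lra. }
  assert (Ht : 0 <= t) by (destruct HK; lra).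
  destruct (HI x t HO Ht) as [_ [I1 I2]].
  unfold Dx, Dt in I1, I2.
  split; [|split; [|split; [|split; [|split]]]].
  - apply (Reg_ex_t M); auto.
  - apply (R1 x t HO).
  - apply (Reg_ex_t M); auto.
  - apply (R2 x t HO).
  - apply Rle_ge. exact I1.
  - apply Rle_ge. exact I2.
Qed.
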